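(* Let $\mathfrak{g}$ be a simply laced semisimple Lie algebra with weight lattice $P$ and $P_{\mathbb{Q}}=P\otimes_{\mathbb{Z}}\mathbb{Q}$, and let $\hat{\mathcal{O}}^{\mathfrak{g}}_{\mathbb{Q}}$ be the $\mathbb{C}_q$-module of formal sums $\sum_{\lambda,\mu\in P_{\mathbb{Q}}}c_{\lambda,\mu}Y^\lambda X^\mu$ (infinitely many nonzero $c_{\lambda,\mu}\in\mathbb{C}_q$ allowed). For $\gamma=\begin{pmatrix} b & a\\ p & r\end{pmatrix}\in SL(2,\mathbb{Z})$ define the $\mathbb{C}_q$-linear map $\rho(\gamma)$ termwise on basis elements by $$\rho(\gamma)(Y^\lambda X^\mu)=q^{-(\mu,\mu)ab-2(\mu,\lambda)ap-(\lambda,\lambda)pr}\,Y^{r\lambda+a\mu}X^{p\lambda+b\mu},\qquad \lambda,\mu\in P_{\mathbb{Q}}.$$ Then $\hat{\mathcal{O}}^{\mathfrak{g}}_{\mathbb{Q}}$ forms a faithful representation of $SL(2,\mathbb{Z})$ under this action (in the sense of the context); in particular $\rho(\gamma)=\rho(\gamma')$ implies $\gamma=\gamma'$.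
   Context: $\mathbb{C}_q$ denotes the algebraic closure of $\mathbb{C}((q))$. $(\cdot,\cdot)$ is the invariant bilinear form on $\mathfrak{g}$, extended $\mathbb{Q}$-bilinearly to $P_{\mathbb{Q}}$; the coweights are identified with weights via this form. The symbols $Y^\lambda X^\mu$ are ordered monomials of the rational quantum torus with relations $X^\mu Y^\lambda=q^{-2(\mu,\lambda)}Y^\lambda X^\mu$ ($\mu,\lambda\in P_{\mathbb{Q}}$), forming a $\mathbb{C}_q$-basis of the algebra, and $\rho(\gamma)$ acts coefficientwise on formal sums. The action is a right action: $\rho(\gamma_1)\circ\rho(\gamma_2)=\rho(\gamma_2\gamma_1)$. *)

(* Defs.v *)
From HB Require Import structures.
From mathcomp Require Import all_boot all_order all_algebra.
Set Implicit Arguments. Unset Strict Implicit. Unset Printing Implicit Defensive.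
Import Order.TTheory GRing.Theory Num.Theory.
Local Open Scope ring_scope.

(* A simply laced semisimple Lie algebra of rank n is encoded by its Cartan
   matrix C: symmetric, 2 on the diagonal, 0 or -1 off the diagonal, positive
   definite (finite type), n >= 1. *)
Definition simply_laced_cartan (n : nat) (C : 'M[int]_n) : Prop :=
  (0 < n)%N /\
  (forall i, C i i = 2) /\
  (forall i j, i != j -> C i j = 0 \/ C i j = -1) /\
  (forall i j, C i j = C j i) /\
  (forall x : 'rV[rat]_n, x != 0 -> 0 < (x *m map_mx intr C *m x^T) 0 0).

(* P_Q = P (x) Q, in coordinates w.r.t. the fundamental weights. *)
Definition PQ (n : nat) := 'rV[rat]_n.

(* Invariant form on P_Q (normalized with (alpha,alpha)=2):
   (omega_i, omega_j) = (C^{-1})_{ij}. *)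
Definition form (n : nat) (C : 'M[int]_n) (x y : PQ n) : rat :=
  (x *m invmx (map_mx intr C) *m y^T) 0 0.

(* Formal sums  sum_{lambda,mu} c_{lambda,mu} Y^lambda X^mu  with arbitrary
   support: the coefficient function (lambda, mu) |-> c_{lambda,mu}. *)
Definition formal_sum (K : Type) (n : nat) := PQ n -> PQ n -> K.

Definition monomial (K : fieldType) (n : nat) (l m : PQ n) : formal_sum K n :=
  fun l' m' => if (l' == l) && (m' == m) then 1 else 0.

Definition SL2Z (g : 'M[int]_2) : Prop := \det g = 1.

Definition g_b (g : 'M[int]_2) : rat := (g 0 0)%:~R.
Definition g_a (g : 'M[int]_2) : rat := (g 0 1)%:~R.
Definition g_p (g : 'M[int]_2) : rat := (g 1 0)%:~R.
Definition g_r (g : 'M[int]_2) : rat := (g 1 1)%:~R.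

Definition rho_exp (n : nat) (C : 'M[int]_n) (g : 'M[int]_2) (l m : PQ n) : rat :=
  - (form C m m) * g_a g * g_b g - 2 * (form C m l) * g_a g * g_p g
  - (form C l l) * g_p g * g_r g.

(* For gamma in SL(2,Z) the map (l,m) |-> (r l + a m, p l + b m) is bijective
   with inverse (nu,ka) |-> (b nu - a ka, - p nu + r ka), so the coefficient of
   Y^nu X^ka in rho(gamma) f is q^{rho_exp l m} * f(l,m) for that preimage.
   [qpow s] stands for q^s. *)
Definition rho (K : fieldType) (n : nat) (C : 'M[int]_n) (qpow : rat -> K)
    (g : 'M[int]_2) (f : formal_sum K n) : formal_sum K n :=
  fun nu ka =>
    let l := g_b g *: nu - g_a g *: ka in
    let m := - (g_p g *: nu) + g_r g *: ka in
    qpow (rho_exp C g l m) * f l m.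

(* Main.v *)
Require Import Defs.
From HB Require Import structures.
From mathcomp Require Import all_boot all_order all_algebra.
From mathcomp Require Import ring.
From Stdlib Require Import FunctionalExtensionality.
Import Order.TTheory GRing.Theory Num.Theory.
Local Open Scope ring_scope.
Set Implicit Arguments. Unset Strict Implicit.

Lemma det22 (R : comNzRingType) (A : 'M[R]_2) : \det A = A 0 0 * A 1 1 - A 0 1 * A 1 0.
Proof.
rewrite (expand_det_row _ 0) !big_ord_recl big_ord0 /cofactor !det_mx11 !mxE /=.
have E1 : (lift 0 0 : 'I_2) = 1 by apply/val_inj.
have E2 : (lift ord0 ord0 : 'I_2) = 1 by apply/val_inj.
have E3 : (lift (lift ord0 ord0) 0 : 'I_2) = 0 by apply/val_inj.
rewrite ?E1 ?E2 ?E3 (_ : ord0 = 0) //.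
have E4 : (lift 1 0 : 'I_2) = 0 by apply/val_inj.
rewrite E4 /bump /= expr0 expr1. ring.
Qed.

Lemma mul22 (A B : 'M[int]_2) i j : (A *m B) i j = A i 0 * B 0 j + A i 1 * B 1 j.
Proof.
rewrite !mxE !big_ord_recl big_ord0 addr0.
have E2 : (lift ord0 ord0 : 'I_2) = 1 by apply/val_inj.
by rewrite E2.
Qed.

Lemma gb_mul g h : g_b (g *m h) = g_b g * g_b h + g_a g * g_p h.
Proof. by rewrite /g_b /g_a /g_p mul22 intrD !intrM. Qed.
Lemma ga_mul g h : g_a (g *m h) = g_b g * g_a h + g_a g * g_r h.
Proof. by rewrite /g_b /g_a /g_r mul22 intrD !intrM. Qed.
Lemma gp_mul g h : g_p (g *m h) = g_p g * g_b h + g_r g * g_p h.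
Proof. by rewrite /g_b /g_r /g_p mul22 intrD !intrM. Qed.
Lemma gr_mul g h : g_r (g *m h) = g_p g * g_a h + g_r g * g_r h.
Proof. by rewrite /g_a /g_r /g_p mul22 intrD !intrM. Qed.

Lemma g_det g : SL2Z g -> g_b g * g_r g - g_a g * g_p g = 1.
Proof.
rewrite /SL2Z det22 => H.
have := congr1 (fun z : int => (z%:~R : rat)) H.
by rewrite /= intrB !intrM /g_b /g_r /g_a /g_p.
Qed.

Section Form.
Variables (n : nat) (C : 'M[int]_n).

Lemma formDl x y z : Defs.form C (x + y) z = Defs.form C x z + Defs.form C y z.
Proof. by rewrite /Defs.form !mulmxDl mxE. Qed.
Lemma formDr x y z : Defs.form C z (x + y) = Defs.form C z x + Defs.form C z y.
Proof. by rewrite /Defs.form linearD /= mulmxDr mxE. Qed.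
Lemma formZl c x z : Defs.form C (c *: x) z = c * Defs.form C x z.
Proof. by rewrite /Defs.form -!scalemxAl mxE. Qed.
Lemma formZr c x z : Defs.form C z (c *: x) = c * Defs.form C z x.
Proof. by rewrite /Defs.form linearZ /= -scalemxAr mxE. Qed.
Lemma formNl x z : Defs.form C (- x) z = - Defs.form C x z.
Proof. by rewrite -scaleN1r formZl mulN1r. Qed.
Lemma formNr x z : Defs.form C z (- x) = - Defs.form C z x.
Proof. by rewrite -scaleN1r formZr mulN1r. Qed.

Lemma formC (HC : forall i j, C i j = C j i) x y : Defs.form C x y = Defs.form C y x.
Proof.
rewrite /Defs.form.
have tr11 : forall A : 'M[rat]_1, A 0 0 = A^T 0 0 by move=> A; rewrite mxE.
rewrite tr11.
rewrite !trmx_mul trmxK trmx_inv map_trmx.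
have -> : C^T = C by apply/matrixP => i j; rewrite mxE HC.
by rewrite mulmxA.
Qed.
End Form.

Theorem mainTheorem4 (n : nat) (C : 'M[int]_n) (K : fieldType) (qpow : rat -> K) :
  simply_laced_cartan C ->
  qpow 0 = 1 ->
  (forall s t : rat, qpow (s + t) = qpow s * qpow t) ->
  (* identity acts trivially *)
  (forall f : formal_sum K n, rho C qpow 1%:M f = f) /\
  (* right action: rho(g1) o rho(g2) = rho(g2 g1) *)
  (forall g1 g2 : 'M[int]_2, SL2Z g1 -> SL2Z g2 ->
     forall f : formal_sum K n, rho C qpow g1 (rho C qpow g2 f) = rho C qpow (g2 *m g1) f) /\
  (* faithfulness *)
  (forall g1 g2 : 'M[int]_2, SL2Z g1 -> SL2Z g2 ->
     (forall f : formal_sum K n, rho C qpow g1 f = rho C qpow g2 f) -> g1 = g2).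
Proof.
move=> [n0 [_ [_ [HC _]]]] q0 qD.
have qnz : forall x, qpow x != 0.
  move=> x; apply/eqP => Hx.
  have := qD x (- x); rewrite subrr q0 Hx mul0r => /eqP; by rewrite oner_eq0.
split.
  move=> f; apply: functional_extensionality => nu; apply: functional_extensionality => ka.
  rewrite /rho /rho_exp /g_b /g_a /g_p /g_r !mxE /=.
  by rewrite !scale1r !scale0r ?subr0 ?oppr0 ?add0r ?addr0 !mulr0 ?mul0r ?subr0 ?oppr0 ?q0 ?mul1r.
split.
  move=> g1 g2 S1 S2 f.
  apply: functional_extensionality => nu; apply: functional_extensionality => ka.
  have D1 := g_det S1; have D2 := g_det S2.
  rewrite /rho /= gb_mul ga_mul gp_mul gr_mul.
  set L1 := g_b g1 *: nu - g_a g1 *: ka.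
  set M1 := - (g_p g1 *: nu) + g_r g1 *: ka.
  set L2 := g_b g2 *: L1 - g_a g2 *: M1.
  set M2 := - (g_p g2 *: L1) + g_r g2 *: M1.
  set L := (_ *: nu - _ *: ka).
  set M := (- (_ *: nu) + _ *: ka).
  have HL : L2 = L by apply/rowP => i; rewrite !mxE; ring.
  have HM : M2 = M by apply/rowP => i; rewrite !mxE; ring.
  rewrite HL HM mulrA -qD; congr (qpow _ * _).
  rewrite /rho_exp gb_mul ga_mul gp_mul gr_mul /L /M /L1 /M1.
  rewrite !(formDl, formDr, formZl, formZr, formNl, formNr).
  rewrite (formC HC ka nu).
  move: D1 D2.
  set b1 := g_b g1; set a1 := g_a g1; set p1 := g_p g1; set r1 := g_r g1.
  set b2 := g_b g2; set a2 := g_a g2; set p2 := g_p g2; set r2 := g_r g2.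
  move=> D1 D2.
  move: (Defs.form C nu nu) (Defs.form C nu ka) (Defs.form C ka ka) => X Y Z.
  clearbody b1 a1 p1 r1 b2 a2 p2 r2.
  have E1 : b1 * r1 = 1 + a1 * p1 by rewrite -D1; ring.
  have E2 : b2 * r2 = 1 + a2 * p2 by rewrite -D2; ring.
  ring: E1 E2.
move=> g1 g2 _ _ H.
have key : forall nu ka : PQ n,
    (g_b g2 *: nu - g_a g2 *: ka == g_b g1 *: nu - g_a g1 *: ka) &&
    (- (g_p g2 *: nu) + g_r g2 *: ka == - (g_p g1 *: nu) + g_r g1 *: ka).
  move=> nu ka.
  have := congr1 (fun F => F nu ka)
    (H (monomial K (g_b g1 *: nu - g_a g1 *: ka) (- (g_p g1 *: nu) + g_r g1 *: ka))).
  rewrite /rho /monomial /= !eqxx mulr1.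
  case: ifP => // _; rewrite mulr0 => /eqP; by rewrite (negbTE (qnz _)).
pose i0 : 'I_n := Ordinal n0.
pose e : PQ n := const_mx 1.
have K1 := key e 0; have K2 := key 0 e.
move: K1 => /andP [/eqP/rowP/(_ i0) E1 /eqP/rowP/(_ i0) E2].
move: K2 => /andP [/eqP/rowP/(_ i0) E3 /eqP/rowP/(_ i0) E4].
move: E1 E2 E3 E4; rewrite !mxE !mulr1 !mulr0 ?subr0 ?sub0r ?addr0 ?add0r.
move=> E1 /oppr_inj E2 /oppr_inj E3 E4.
move: E1 E2 E3 E4; rewrite /g_b /g_a /g_p /g_r => /intr_inj E1 /intr_inj E2 /intr_inj E3 /intr_inj E4.
apply/matrixP => i j.
have I2 : forall k : 'I_2, k = 0 \/ k = 1.
  by move=> k; case: k => [[|[|//]] Hk]; [left|right]; apply/val_inj.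
by case: (I2 i) => ->; case: (I2 j) => ->.
Qed.
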